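(* Let Assumptions A1, A2 and A3 hold. Let the maximal iteration number $T\in\mathbb{N}$ satisfy $T\le\frac{1}{2\eta\gamma^2\varepsilon^2}$, and let the step size satisfy $0<\eta\le\frac{1}{\beta^2\gamma^2}$. Assume the radius $R$ in A3 satisfies $$R\ge2\|r_0\|\max\Big(\eta\gamma\beta\big(1+2\eta\gamma^2(\varepsilon_0^2+\beta\varepsilon)T\big),\ \sqrt T\big(\sqrt\eta+\eta\gamma\sqrt T(\varepsilon+\varepsilon_0+\eta\gamma^2\beta(\varepsilon_0^2+\varepsilon\beta)T)\big)\Big).$$ Then for all $\tau\le T$: $$\|\theta_\tau-\theta_0\|\le\tfrac R2,$$ $$\|\tilde r_\tau-r_\tau\|\le2\eta\gamma^2(\varepsilon_0^2+\beta\varepsilon)\,\tau\,\|r_0\|,$$ $$\|\tilde\theta_\tau-\theta_\tau\|\le\eta\gamma\big(\varepsilon+\varepsilon_0+\eta\gamma^2\beta(\varepsilon_0^2+\varepsilon\beta)\tau\big)\tau\|r_0\|.$$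
   Context: Norms: $\|\cdot\|$ is the Euclidean norm for vectors and the spectral norm for matrices. Setting. Let $f:\mathbb{R}^N\to\mathbb{R}^n$ be continuously differentiable with Jacobian $\mathcal{J}(\theta)\in\mathbb{R}^{n\times N}$. Let $A\in\mathbb{R}^{m\times n}$ and let $\gamma\ge\|A\|$. Fix $y\in\mathbb{R}^m$, a starting point $\theta_0\in\mathbb{R}^N$, and a fixed deterministic ''reference Jacobian'' $J\in\mathbb{R}^{n\times N}$. Iterations. Gradient descent with step size $\eta>0$ is applied to $\mathcal{L}(\theta)=\frac12\|Af(\theta)-y\|^2$ and to $\mathcal{L}_{\rm lin}(\theta)=\frac12\|Af(\theta_0)+AJ(\theta-\theta_0)-y\|^2$, both started at $\theta_0=\tilde\theta_0$: $$\theta_{\tau+1}=\theta_\tau-\eta\mathcal{J}(\theta_\tau)^\top A^\top r_\tau,\qquad r_\tau:=Af(\theta_\tau)-y,$$ $$\tilde\theta_{\tau+1}=\tilde\theta_\tau-\eta J^\top A^\top\tilde r_\tau,\qquad \tilde r_\tau:=Af(\theta_0)+AJ(\tilde\theta_\tau-\theta_0)-y.$$ Assumption A1: there is $\beta>0$ with $\|J\|\le\beta$ and $\|\mathcal{J}(\theta)\|\le\beta$ for all $\theta\in\mathbb{R}^N$. Assumption A2: there is $\varepsilon_0>0$ with $\|\mathcal{J}(\theta_0)-J\|\le\varepsilon_0$ and $\|\mathcal{J}(\theta_0)\mathcal{J}(\theta_0)^\top-JJ^\top\|\le\varepsilon_0^2$. Assumption A3: there are $\varepsilon>0$ and $R>0$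 with $\|\mathcal{J}(\theta)-\mathcal{J}(\theta_0)\|\le\varepsilon/2$ for all $\theta$ satisfying $\|\theta-\theta_0\|\le R$. *)

(* Defs.v *)
From HB Require Import structures.
From mathcomp Require Import all_boot all_order all_algebra.
From mathcomp Require Import all_classical all_reals all_analysis.
Set Implicit Arguments. Unset Strict Implicit. Unset Printing Implicit Defensive.
Import Order.TTheory GRing.Theory Num.Theory.
Local Open Scope ring_scope.
Local Open Scope classical_set_scope.

Section Defs.
Variable R : realType.

Definition enorm (k : nat) (v : 'cV[R]_k) : R :=
  Num.sqrt (\sum_(i < k) (v i 0) ^+ 2).

Definition opnorm (p q : nat) (M : 'M[R]_(p, q)) : R :=
  sup [set enorm (M *m v) | v in [set v : 'cV[R]_q | enorm v <= 1]].

(* Gradient descent on L(theta) = 1/2 ||A f(theta) - y||^2 :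
   theta_{t+1} = theta_t - eta Jf(theta_t)^T A^T (A f(theta_t) - y). *)
Fixpoint gd_theta (N n m : nat) (f : 'cV[R]_N -> 'cV[R]_n)
    (Jf : 'cV[R]_N -> 'M[R]_(n, N)) (A : 'M[R]_(m, n)) (y : 'cV[R]_m)
    (eta : R) (theta0 : 'cV[R]_N) (t : nat) : 'cV[R]_N :=
  match t with
  | 0 => theta0
  | t'.+1 =>
      let th := gd_theta f Jf A y eta theta0 t' in
      th - eta *: ((Jf th)^T *m A^T *m (A *m f th - y))
  end.

Definition gd_res (N n m : nat) (f : 'cV[R]_N -> 'cV[R]_n)
    (Jf : 'cV[R]_N -> 'M[R]_(n, N)) (A : 'M[R]_(m, n)) (y : 'cV[R]_m)
    (eta : R) (theta0 : 'cV[R]_N) (t : nat) : 'cV[R]_m :=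
  A *m f (gd_theta f Jf A y eta theta0 t) - y.

(* Gradient descent on the linearized loss
   L_lin(theta) = 1/2 ||A f(theta0) + A J (theta - theta0) - y||^2. *)
Fixpoint lin_theta (N n m : nat) (f : 'cV[R]_N -> 'cV[R]_n)
    (J : 'M[R]_(n, N)) (A : 'M[R]_(m, n)) (y : 'cV[R]_m)
    (eta : R) (theta0 : 'cV[R]_N) (t : nat) : 'cV[R]_N :=
  match t with
  | 0 => theta0
  | t'.+1 =>
      let th := lin_theta f J A y eta theta0 t' in
      th - eta *: (J^T *m A^T *m (A *m f theta0 + A *m J *m (th - theta0) - y))
  end.

Definition lin_res (N n m : nat) (f : 'cV[R]_N -> 'cV[R]_n)
    (J : 'M[R]_(n, N)) (A : 'M[R]_(m, n)) (y : 'cV[R]_m)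
    (eta : R) (theta0 : 'cV[R]_N) (t : nat) : 'cV[R]_m :=
  A *m f theta0 + A *m J *m (lin_theta f J A y eta theta0 t - theta0) - y.

End Defs.

(* Main.v *)
Require Import Defs.
From HB Require Import structures.
From mathcomp Require Import all_boot all_order all_algebra.
From mathcomp Require Import all_classical all_reals all_analysis.
From mathcomp Require Import ring lra.
Import Order.TTheory GRing.Theory Num.Theory.
Import numFieldNormedType.Exports.
Local Open Scope ring_scope.
Local Open Scope classical_set_scope.


Section S.
Context {R : realType}.

Definition dot {k} (u v : 'cV[R]_k) : R := (u^T *m v) 0 0.

Lemma dotE k (u v : 'cV[R]_k) : dot u v = \sum_i u i 0 * v i 0.
Proof. by rewrite /dot mxE; apply: eq_bigr => i _; rewrite mxE. Qed.

Lemma dot_linear {k} (u : 'cV[R]_k) : linear (dot u).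
Proof. by move=> c x y; rewrite /dot mulmxDr -scalemxAr !mxE. Qed.

HB.instance Definition _ k (u : 'cV[R]_k) :=
  GRing.isLinear.Build R 'cV[R]_k R _ (dot u) (dot_linear u).

Lemma dot_differentiable k (u : 'cV[R]_k) x : differentiable (dot u) x.
Proof.
have -> : dot u = \sum_(i < k) (u i 0 *: (fun z : 'cV[R]_k => z i 0)).
  by rewrite fct_sumE; apply/funext => z; rewrite dotE; apply: eq_bigr => i _.
by apply: differentiable_sum => i; apply: differentiableZ; apply: differentiable_coord.
Qed.

Lemma dot_continuous k (u : 'cV[R]_k) : continuous (dot u).
Proof. by move=> x; apply: differentiable_continuous; exact: dot_differentiable. Qed.

Lemma diff_dot k (u : 'cV[R]_k) x : 'd (dot u) x = dot u :> (_ -> _).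
Proof.
pose L : {linear 'cV[R]_k -> R} := dot u.
have := @diff_lin R _ _ L x (@dot_continuous k u).
by [].
Qed.


Lemma sq_le (x y : R) : 0 <= y -> x ^+ 2 <= y ^+ 2 -> x <= y.
Proof.
move=> y0 h; apply: (le_trans (ler_norm x)).
by rewrite -sqrtr_sqr -(ger0_norm y0) -sqrtr_sqr ler_wsqrtr.
Qed.

Lemma enormE {k} (v : 'cV[R]_k) : enorm v = Num.sqrt (dot v v).
Proof. by rewrite /enorm dotE; congr Num.sqrt; apply: eq_bigr => i _; rewrite expr2. Qed.

Lemma dot_ge0 {k} (v : 'cV[R]_k) : 0 <= dot v v.
Proof. by rewrite dotE; apply: sumr_ge0 => i _; rewrite -expr2 sqr_ge0. Qed.

Lemma enorm_ge0 {k} (v : 'cV[R]_k) : 0 <= enorm v.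
Proof. by rewrite enormE sqrtr_ge0. Qed.

Lemma enorm_sq {k} (v : 'cV[R]_k) : enorm v ^+ 2 = dot v v.
Proof. by rewrite enormE sqr_sqrtr // dot_ge0. Qed.

Lemma dotC {k} (u v : 'cV[R]_k) : dot u v = dot v u.
Proof. by rewrite !dotE; apply: eq_bigr => i _; rewrite mulrC. Qed.

Lemma dotDr {k} (u v w : 'cV[R]_k) : dot u (v + w) = dot u v + dot u w.
Proof. exact: linearD. Qed.
Lemma dotBr {k} (u v w : 'cV[R]_k) : dot u (v - w) = dot u v - dot u w.
Proof. exact: linearB. Qed.
Lemma dotZr {k} (u v : 'cV[R]_k) a : dot u (a *: v) = a * dot u v.
Proof. exact: linearZ. Qed.
Lemma dotDl {k} (u v w : 'cV[R]_k) : dot (v + w) u = dot v u + dot w u.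
Proof. by rewrite !(dotC _ u) dotDr. Qed.
Lemma dotBl {k} (u v w : 'cV[R]_k) : dot (v - w) u = dot v u - dot w u.
Proof. by rewrite !(dotC _ u) dotBr. Qed.
Lemma dotZl {k} (u v : 'cV[R]_k) a : dot (a *: v) u = a * dot v u.
Proof. by rewrite !(dotC _ u) dotZr. Qed.
Lemma dot_tr {p q} (M : 'M[R]_(p, q)) u v : dot (M^T *m u) v = dot u (M *m v).
Proof. by rewrite /dot trmx_mul trmxK mulmxA. Qed.

Lemma dot0_eq {k} (u : 'cV[R]_k) : dot u u = 0 -> u = 0.
Proof.
rewrite dotE => h; apply/matrixP => i j; rewrite (ord1 j) mxE.
have := psumr_eq0P (P := xpredT) (fun i _ => (le_trans (lexx 0) (sqr_ge0 (u i 0)))) h (i := i) isT.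
by move=> /= /eqP; rewrite mulf_eq0 orbb => /eqP.
Qed.

Lemma enorm0_eq {k} (u : 'cV[R]_k) : enorm u = 0 -> u = 0.
Proof. by move=> h; apply: dot0_eq; rewrite -enorm_sq h expr0n. Qed.

Lemma dot0l {k} (u : 'cV[R]_k) : dot 0 u = 0.
Proof. by rewrite /dot trmx0 mul0mx mxE. Qed.

Lemma enorm0 {k} : enorm (0 : 'cV[R]_k) = 0.
Proof. by rewrite enormE dot0l sqrtr0. Qed.

Lemma enormZ {k} (u : 'cV[R]_k) a : enorm (a *: u) = `|a| * enorm u.
Proof. by rewrite !enormE dotZl dotZr mulrA -expr2 sqrtrM ?sqr_ge0 // sqrtr_sqr. Qed.

Lemma enormN {k} (u : 'cV[R]_k) : enorm (- u) = enorm u.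
Proof. by rewrite -scaleN1r enormZ normrN normr1 mul1r. Qed.

Lemma enormB_sym {k} (u v : 'cV[R]_k) : enorm (u - v) = enorm (v - u).
Proof. by rewrite -enormN opprB. Qed.

Lemma CS {k} (u v : 'cV[R]_k) : dot u v <= enorm u * enorm v.
Proof.
have [a0|an0] := eqVneq (enorm u) 0.
  by rewrite (enorm0_eq _ a0) dot0l enorm0 mul0r.
have [b0|bn0] := eqVneq (enorm v) 0.
  by rewrite (enorm0_eq _ b0) dotC dot0l enorm0 mulr0.
have ha := enorm_ge0 u; have hb := enorm_ge0 v.
have hA := enorm_sq u; have hB := enorm_sq v.
have h := dot_ge0 (enorm v *: u - enorm u *: v).
rewrite !(dotBl, dotBr, dotZl, dotZr) (dotC v u) -hA -hB in h.
have hab : 0 < enorm u * enorm v by rewrite mulr_gt0 // lt_def ?an0 ?bn0.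
rewrite -(ler_pM2l hab); nra.
Qed.

Lemma sq_enormD {k} (u v : 'cV[R]_k) :
  enorm (u + v) ^+ 2 = enorm u ^+ 2 + 2 * dot u v + enorm v ^+ 2.
Proof. rewrite !enorm_sq dotDl !dotDr (dotC v u); ring. Qed.

Lemma sq_enormB {k} (u v : 'cV[R]_k) :
  enorm (u - v) ^+ 2 = enorm u ^+ 2 - 2 * dot u v + enorm v ^+ 2.
Proof. rewrite !enorm_sq dotBl !dotBr (dotC v u); ring. Qed.

Lemma enormD {k} (u v : 'cV[R]_k) : enorm (u + v) <= enorm u + enorm v.
Proof.
apply: sq_le; first by rewrite addr_ge0 ?enorm_ge0.
rewrite sq_enormD; have := CS u v; nra.
Qed.

Lemma enormB {k} (u v : 'cV[R]_k) : enorm (u - v) <= enorm u + enorm v.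
Proof. by rewrite -(enormN v) enormD. Qed.

Lemma coord_le {k} (v : 'cV[R]_k) i : `|v i 0| <= enorm v.
Proof.
apply: sq_le; first exact: enorm_ge0.
rewrite real_normK ?num_real // /enorm sqr_sqrtr ?sumr_ge0 // => [|j _]; last exact: sqr_ge0.
rewrite (bigD1 i) //= lerDl sumr_ge0 // => j _; exact: sqr_ge0.
Qed.


Definition opb {p q} (M : 'M[R]_(p, q)) (c : R) := forall v, enorm (M *m v) <= c * enorm v.

Lemma opnorm_ub {p q} (M : 'M[R]_(p, q)) :
  has_ubound [set enorm (M *m v) | v in [set v : 'cV[R]_q | enorm v <= 1]].
Proof.
exists (Num.sqrt (\sum_i (\sum_j `|M i j|) ^+ 2)) => _ [w /= hw <-].
rewrite /enorm; apply: ler_wsqrtr; apply: ler_sum => i _.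
rewrite -real_normK ?num_real // -[X in _ <= X]real_normK ?num_real //.
apply: lerXn2r; rewrite ?nnegrE //.
rewrite mxE (le_trans (ler_norm_sum _ _ _)) // [X in _ <= X]ger0_norm; last by apply: sumr_ge0.
apply: ler_sum => j _; rewrite normrM ler_piMr //.
exact: le_trans (coord_le _ _) hw.
Qed.

Lemma opnorm_ge0 {p q} (M : 'M[R]_(p, q)) : 0 <= opnorm M.
Proof.
rewrite /opnorm; apply: (ub_le_sup (opnorm_ub M)).
by exists 0 => //=; rewrite ?enorm0 ?ler01 // mulmx0 enorm0.
Qed.

Lemma opnormP {p q} (M : 'M[R]_(p, q)) c : opnorm M <= c -> opb M c.
Proof.
move=> hc v.
have [v0|vn0] := eqVneq (enorm v) 0.
  by rewrite (enorm0_eq _ v0) mulmx0 !enorm0 mulr0.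
have vp : 0 < enorm v by rewrite lt_def vn0 enorm_ge0.
set w := (enorm v)^-1 *: v.
have hw : enorm w <= 1 by rewrite /w enormZ ger0_norm ?invr_ge0 ?enorm_ge0 // mulVf.
have : enorm (M *m w) <= opnorm M.
  by rewrite /opnorm; apply: (ub_le_sup (opnorm_ub M)); exists w.
rewrite /w -scalemxAr enormZ ger0_norm ?invr_ge0 ?enorm_ge0 // => h.
have := ler_wpM2l (enorm_ge0 v) (le_trans h hc).
by rewrite mulrA mulfV // mul1r mulrC.
Qed.

Lemma opb_tr {p q} (M : 'M[R]_(p, q)) c : 0 <= c -> opb M c -> opb M^T c.
Proof.
move=> c0 hM u; set x := M^T *m u.
have h1 : enorm x ^+ 2 <= enorm u * (c * enorm x).
  rewrite enorm_sq {1}/x dot_tr (le_trans (CS _ _)) //.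
  by rewrite ler_wpM2l ?enorm_ge0.
have [x0|xn0] := eqVneq (enorm x) 0.
  by rewrite x0 mulr_ge0 ?enorm_ge0.
have xp : 0 < enorm x by rewrite lt_def xn0 enorm_ge0.
rewrite -(ler_pM2r xp); nra.
Qed.

Lemma opb_mul {p q s} (A : 'M[R]_(p, q)) (B : 'M[R]_(q, s)) a b :
  0 <= a -> opb A a -> opb B b -> opb (A *m B) (a * b).
Proof.
move=> a0 hA hB v; rewrite -mulmxA (le_trans (hA _)) // -mulrA ler_wpM2l //.
Qed.

Lemma opb_add {p q} (M N : 'M[R]_(p, q)) a b : opb M a -> opb N b -> opb (M + N) (a + b).
Proof.
by move=> hM hN v; rewrite mulmxDl (le_trans (enormD _ _)) // mulrDl lerD.
Qed.

Lemma opb_sub {p q} (M N : 'M[R]_(p, q)) a b : opb M a -> opb N b -> opb (M - N) (a + b).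
Proof.
by move=> hM hN v; rewrite mulmxBl (le_trans (enormB _ _)) // mulrDl lerD.
Qed.

Lemma opb_le {p q} (M : 'M[R]_(p, q)) a b : opb M a -> a <= b -> opb M b.
Proof. by move=> hM ab v; rewrite (le_trans (hM v)) // ler_wpM2r ?enorm_ge0. Qed.

Lemma contr {p q} (B : 'M[R]_(p, q)) b eta r : opb B b -> 0 <= eta ->
  eta * b ^+ 2 <= 1 ->
  enorm (r - eta *: (B *m (B^T *m r))) ^+ 2 <=
    enorm r ^+ 2 - eta * enorm (B^T *m r) ^+ 2.
Proof.
move=> hB e0 eb; set g := B^T *m r.
rewrite sq_enormB dotZr enormZ -dot_tr -/g -enorm_sq ger0_norm //.
have h1 := hB g; have h2 := enorm_ge0 (B *m g); have h3 := enorm_ge0 g.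
have h4 : enorm (B *m g) ^+ 2 <= b ^+ 2 * enorm g ^+ 2.
  rewrite -exprMn; apply: lerXn2r; rewrite ?nnegrE //; exact: le_trans h1.
have h5 : eta ^+ 2 * enorm (B *m g) ^+ 2 <= eta * enorm g ^+ 2.
  apply: (le_trans (ler_wpM2l (sqr_ge0 eta) h4)).
  rewrite mulrA expr2 -mulrA -(mulrA eta) ler_wpM2l //.
  rewrite mulrA -[X in _ <= X]mul1r ler_wpM2r ?sqr_ge0 //.
nra.
Qed.

Lemma line_fun {V : normedModType R} (g : V -> R) (a d : V) (t : R) :
  (fun h : R => h^-1 *: (((fun s : R => g (a + s *: d)) \o shift t) (h *: 1)
      - g (a + t *: d))) =
  (fun h : R => h^-1 *: ((g \o shift (a + t *: d)) (h *: d) - g (a + t *: d))).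
Proof.
apply/funext => h /=; congr (_ *: (g _ - _)).
by rewrite /shift /= scalerDl [h *: 1]mulr1 addrCA addrA.
Qed.

Lemma derive_line {V : normedModType R} (g : V -> R) (a d : V) (t : R) :
  'D_1 (fun s : R => g (a + s *: d)) t = 'D_d g (a + t *: d).
Proof. by rewrite /derive line_fun. Qed.

Lemma derivable_line {V : normedModType R} (g : V -> R) (a d : V) (t : R) :
  derivable g (a + t *: d) d -> derivable (fun s : R => g (a + s *: d)) t 1.
Proof. by rewrite /derivable line_fun. Qed.

Lemma mvt_bound {N n} (f : 'cV[R]_N -> 'cV[R]_n) (Jf : 'cV[R]_N -> 'M[R]_(n, N))
    (K : 'M[R]_(n, N)) (a b : 'cV[R]_N) (L : R) :
  (forall th, differentiable f th) -> (forall th v, 'd f th v = Jf th *m v) ->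
  0 <= L ->
  (forall s, 0 <= s <= 1 -> opb (Jf (a + s *: (b - a)) - K) L) ->
  enorm (f b - f a - K *m (b - a)) <= L * enorm (b - a).
Proof.
move=> fd hJ L0 hL.
set w := f b - f a - K *m (b - a).
pose g := (dot w \o f) - dot (K^T *m w).
have gd z : differentiable g z.
  apply: differentiableB; last exact: dot_differentiable.
  by apply: differentiable_comp => //; exact: dot_differentiable.
have dg z v : 'd g z v = dot w ((Jf z - K) *m v).
  rewrite /g diffB //; last exact: dot_differentiable.
    rewrite /= diff_comp //; last exact: dot_differentiable.
    by rewrite /= !diff_dot hJ dot_tr mulmxBl dotBr.
  by apply: differentiable_comp => //; exact: dot_differentiable.
pose phi s := g (a + s *: (b - a)).
pose dphi s := dot w ((Jf (a + s *: (b - a)) - K) *m (b - a)).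
have phid (s : R) : is_derive s (1:R) phi (dphi s).
  apply: DeriveDef; first by apply: derivable_line; apply: diff_derivable.
  by rewrite derive_line deriveE // dg.
have [c c01 hc] := MVT_segment (f := phi) (df := dphi) ler01 (fun x _ => phid x)
  (derivable_within_continuous (fun x _ => @ex_derive _ _ _ _ _ _ _ (phid x))).
have e1 : phi 1 - phi 0 = dot w w.
  have gE z : g z = dot w (f z) - dot (K^T *m w) z by [].
  rewrite /phi !gE scale1r scale0r addr0.
  have -> : a + (b - a) = b by rewrite addrC subrK.
  rewrite !dot_tr /w !dotBr; ring.
have c01' : 0 <= c <= 1 by move: c01; rewrite in_itv.
have h1 : enorm w ^+ 2 <= enorm w * (L * enorm (b - a)).
  rewrite enorm_sq -e1 hc subr0 mulr1 /dphi (le_trans (CS _ _)) //.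
  by rewrite ler_wpM2l ?enorm_ge0 // hL.
have [x0|xn0] := eqVneq (enorm w) 0.
  by rewrite x0 mulr_ge0 ?enorm_ge0.
have xp : 0 < enorm w by rewrite lt_def xn0 enorm_ge0.
rewrite -(ler_pM2l xp); nra.
Qed.

Lemma pow_aux (x : R) (t : nat) : 0 <= x -> (1 + x) ^+ t * (1 - x * t%:R) <= 1.
Proof.
move=> x0; elim: t => [|t IH]; first by rewrite expr0 mulr0 subr0 mulr1.
have p0 : 0 <= (1 + x) ^+ t by rewrite exprn_ge0 // addr_ge0.
rewrite exprS -natr1 (le_trans _ IH) //.
have : (1 + x) * (1 - x * (t%:R + 1)) <= 1 - x * t%:R.
  have : 0 <= x ^+ 2 * (t%:R + 1) by rewrite mulr_ge0 ?sqr_ge0 // addr_ge0.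
  nra.
move=> h; have := ler_wpM2l p0 h; nra.
Qed.

Lemma pow_bound (x : R) (t T : nat) : 0 <= x -> 2 * x * T%:R <= 1 -> (t <= T)%N ->
  (1 + x) ^+ t <= 2.
Proof.
move=> x0 hT tT.
have htT : t%:R <= T%:R :> R by rewrite ler_nat.
have h1 : x * t%:R <= 1 / 2.
  rewrite ler_pdivlMr //; have := ler_wpM2l x0 htT; nra.
have := pow_aux x t x0; have p0 : 0 <= (1 + x) ^+ t by rewrite exprn_ge0 // addr_ge0.
nra.
Qed.

Lemma step_r (s q a z eta : R) : 0 <= s -> 0 <= q -> 0 <= eta ->
  s ^+ 2 <= a ^+ 2 - eta * q ^+ 2 ->
  (s + z * eta * q) ^+ 2 <= (1 + eta * z ^+ 2) * a ^+ 2.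
Proof.
move=> s0 q0 e0 h.
have : 0 <= eta * (q - z * s) ^+ 2 by rewrite mulr_ge0 ?sqr_ge0.
have : 0 <= eta * z ^+ 2 by rewrite mulr_ge0 ?sqr_ge0.
nra.
Qed.

Lemma cs_step (s q t eta D D' : R) : 0 <= s -> 0 <= q -> 0 <= eta -> 0 <= t ->
  0 <= D -> s ^+ 2 <= t * eta * D -> D + eta * q ^+ 2 <= D' ->
  (s + eta * q) ^+ 2 <= (t + 1) * eta * D'.
Proof.
move=> s0 q0 e0 t0 D0 h hD.
apply: (@le_trans _ _ ((t + 1) * eta * (D + eta * q ^+ 2))); last first.
  by rewrite ler_wpM2l // mulr_ge0 // addr_ge0.
have [t0e|tp] := eqVneq t 0.
  rewrite t0e in h *.
  have -> : s = 0 by apply/eqP; rewrite -sqrf_eq0 eq_le sqr_ge0 andbT; move: h; rewrite !mul0r.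
  have : 0 <= eta * D by rewrite mulr_ge0.
  nra.
have t0' : 0 < t by rewrite lt_def tp.
rewrite -(ler_pM2l t0').
have : 0 <= (s - t * eta * q) ^+ 2 by rewrite sqr_ge0.
have : 0 <= t * eta * D by rewrite !mulr_ge0.
have : 0 <= eta * D by rewrite !mulr_ge0.
have : 0 <= t * (eta * D) by rewrite !mulr_ge0.
nra.
Qed.

Lemma opbN {p q} (M : 'M[R]_(p, q)) c : opb M c -> opb (- M) c.
Proof. by move=> h v; rewrite mulNmx enormN. Qed.

Lemma trmxB {p q} (M N : 'M[R]_(p, q)) : (M - N)^T = M^T - N^T.
Proof. by apply/matrixP => i j; rewrite !mxE. Qed.

End S.
Arguments opnormP {R p q M c}.
Arguments opb_tr {R p q M c}.
Arguments opb_mul {R p q s A B a b}.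
Arguments opb_add {R p q M N a b}.
Arguments opb_sub {R p q M N a b}.
Arguments opb_le {R p q M a b}.
Arguments opbN {R p q M c}.
Arguments contr {R p q B b eta} r.
Arguments mvt_bound {R N n f Jf K a b L}.

Theorem theorem3p1 (R : realType) (N n m : nat)
    (f : 'cV[R]_N -> 'cV[R]_n) (Jf : 'cV[R]_N -> 'M[R]_(n, N))
    (A : 'M[R]_(m, n)) (gamma : R) (y : 'cV[R]_m) (theta0 : 'cV[R]_N)
    (J : 'M[R]_(n, N)) (eta beta eps0 eps Rad : R) (T : nat) :
  (* f is continuously differentiable with Jacobian Jf *)
  (forall th, differentiable f th) ->
  (forall th v, 'd f th v = Jf th *m v) ->
  continuous Jf ->
  opnorm A <= gamma ->
  (* A1 *)
  0 < beta -> opnorm J <= beta -> (forall th, opnorm (Jf th) <= beta) ->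
  (* A2 *)
  0 < eps0 -> opnorm (Jf theta0 - J) <= eps0 ->
  opnorm (Jf theta0 *m (Jf theta0)^T - J *m J^T) <= eps0 ^+ 2 ->
  (* A3 *)
  0 < eps -> 0 < Rad ->
  (forall th, enorm (th - theta0) <= Rad -> opnorm (Jf th - Jf theta0) <= eps / 2) ->
  (* T <= 1/(2 eta gamma^2 eps^2) and 0 < eta <= 1/(beta^2 gamma^2) *)
  0 < eta ->
  2 * eta * gamma ^+ 2 * eps ^+ 2 * T%:R <= 1 ->
  eta * beta ^+ 2 * gamma ^+ 2 <= 1 ->
  (* lower bound on the radius R *)
  Rad >= 2 * enorm (gd_res f Jf A y eta theta0 0) *
    Num.max (eta * gamma * beta *
               (1 + 2 * eta * gamma ^+ 2 * (eps0 ^+ 2 + beta * eps) * T%:R))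
            (Num.sqrt T%:R *
               (Num.sqrt eta + eta * gamma * Num.sqrt T%:R *
                  (eps + eps0 + eta * gamma ^+ 2 * beta *
                     (eps0 ^+ 2 + eps * beta) * T%:R))) ->
  forall tau : nat, (tau <= T)%N ->
    [/\ enorm (gd_theta f Jf A y eta theta0 tau - theta0) <= Rad / 2,
        enorm (lin_res f J A y eta theta0 tau - gd_res f Jf A y eta theta0 tau)
          <= 2 * eta * gamma ^+ 2 * (eps0 ^+ 2 + beta * eps) * tau%:R *
             enorm (gd_res f Jf A y eta theta0 0)
      & enorm (lin_theta f J A y eta theta0 tau - gd_theta f Jf A y eta theta0 tau)
          <= eta * gamma * (eps + eps0 + eta * gamma ^+ 2 * beta *
                              (eps0 ^+ 2 + eps * beta) * tau%:R) * tau%:R *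
             enorm (gd_res f Jf A y eta theta0 0)].
Proof.
move=> fd hd _ hA b0 hJ hJf e00 hJ0 hJJ e0 R0 hball eta0 hT hEta hRad.
set r0 := enorm (gd_res f Jf A y eta theta0 0).
set th := gd_theta f Jf A y eta theta0.
set thl := lin_theta f J A y eta theta0.
have rE t : gd_res f Jf A y eta theta0 t = A *m f (th t) - y by [].
have rlE t : lin_res f J A y eta theta0 t =
   A *m f theta0 + A *m J *m (thl t - theta0) - y by [].
have g0 : 0 <= gamma := le_trans (opnorm_ge0 A) hA.
have oA := opnormP hA.
have oJ := opnormP hJ.
have oJf z := opnormP (hJf z).
have oJ0 := opnormP hJ0.
have oJJ := opnormP hJJ.
have r00 : 0 <= r0 := enorm_ge0 _.
have eta0' := ltW eta0; have b0' := ltW b0; have e0' := ltW e0; have e00' := ltW e00.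
set E := fun t : nat => eps + eps0 + eta * gamma ^+ 2 * beta *
                     (eps0 ^+ 2 + eps * beta) * t%:R.
have Emono t : (t <= T)%N -> E t * t%:R <= E T * T%:R.
  move=> tT; have htT : t%:R <= T%:R :> R by rewrite ler_nat.
  have h0 : 0 <= eta * gamma ^+ 2 * beta * (eps0 ^+ 2 + eps * beta).
    by rewrite !mulr_ge0 ?sqr_ge0 // addr_ge0 ?sqr_ge0 // mulr_ge0.
  apply: ler_pM => //; first by rewrite /E !addr_ge0 // mulr_ge0.
  by rewrite /E lerD2l ler_wpM2l.
have ballP t : (t <= T)%N ->
    enorm (thl t - th t) <= eta * gamma * E t * t%:R * r0 ->
    enorm (thl t - theta0) ^+ 2 <= t%:R * eta * (r0 ^+ 2 - enorm (lin_res f J A y eta theta0 t) ^+ 2) ->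
    enorm (th t - theta0) <= Rad / 2.
  move=> tT h3 h5.
  have htT : t%:R <= T%:R :> R by rewrite ler_nat.
  have hS : enorm (thl t - theta0) <= Num.sqrt T%:R * Num.sqrt eta * r0.
    apply: sq_le; first by rewrite !mulr_ge0 ?sqrtr_ge0.
    have -> : (Num.sqrt T%:R * Num.sqrt eta * r0) ^+ 2 = T%:R * eta * r0 ^+ 2.
      by rewrite !exprMn (sqr_sqrtr (ler0n R T)) (sqr_sqrtr eta0').
    apply: (le_trans h5).
    have h6 : 0 <= t%:R * eta * enorm (lin_res f J A y eta theta0 t) ^+ 2.
      by rewrite !mulr_ge0 ?enorm_ge0 ?ler0n.
    have h7 : 0 <= (T%:R - t%:R) * eta * r0 ^+ 2.
      by rewrite !mulr_ge0 ?sqr_ge0 // subr_ge0.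
    nra.
  have h3' : enorm (thl t - th t) <= eta * gamma * E T * T%:R * r0.
    apply: (le_trans h3).
    have hh := ler_wpM2l (mulr_ge0 (mulr_ge0 eta0' g0) r00) (Emono t tT).
    lra.
  have htri : enorm (th t - theta0) <= enorm (thl t - theta0) + enorm (thl t - th t).
    have -> : th t - theta0 = (thl t - theta0) - (thl t - th t).
      by apply/matrixP=> i j; rewrite !mxE; ring.
    exact: enormB.
  set X := eta * gamma * beta * _ in hRad.
  set Y := Num.sqrt T%:R * _ in hRad.
  have hY : Y <= Num.max X Y by rewrite le_max lexx orbT.
  have sTT : Num.sqrt T%:R * Num.sqrt T%:R = T%:R :> R.
    by rewrite -expr2 sqr_sqrtr ?ler0n.
  have h2 := ler_wpM2l (mulr_ge0 (ler0n _ 2) r00) hY.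
  have hYe : Y = Num.sqrt T%:R * Num.sqrt eta + eta * gamma *
     (Num.sqrt T%:R * Num.sqrt T%:R) * E T.
    by rewrite /Y /E; ring.
  rewrite sTT in hYe.
  have h8 : 2 * r0 * Y = 2 * (Num.sqrt T%:R * Num.sqrt eta * r0 +
     eta * gamma * E T * T%:R * r0) by rewrite hYe; ring.
  rewrite h8 in h2.
  have h9 := le_trans h2 hRad.
  lra.
set rl := lin_res f J A y eta theta0.
pose r t := A *m f (th t) - y.
have rl0 : rl 0%N = r 0%N.
  by rewrite /rl rlE /r /= subrr mulmx0 addr0.
have r0E : r0 = enorm (r 0%N) by [].
pose x := eta * gamma ^+ 2 * eps ^+ 2.
have x0 : 0 <= x by rewrite /x !mulr_ge0 ?sqr_ge0.
suff main : forall t, (t <= T)%N -> [/\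
    enorm (r t) ^+ 2 <= (1 + x) ^+ t * r0 ^+ 2,
    enorm (rl t - r t) <= 2 * eta * gamma ^+ 2 * (eps0 ^+ 2 + beta * eps) * t%:R * r0,
    enorm (thl t - th t) <= eta * gamma * E t * t%:R * r0,
    enorm (rl t) ^+ 2 <= r0 ^+ 2 &
    enorm (thl t - theta0) ^+ 2 <= t%:R * eta * (r0 ^+ 2 - enorm (rl t) ^+ 2)].
  move=> tau tT; have [Q1 Q2 Q3 Q4 Q5] := main tau tT.
  split; first exact: ballP.
    by rewrite rE.
  exact: Q3.
elim=> [|t IH] tT.
  rewrite expr0 mul1r rl0 -r0E !mulr0 !mul0r subrr enorm0 /thl /th /= subrr enorm0.
  by rewrite expr0n /= !lexx.
have tT' : (t <= T)%N := ltnW tT.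
have [Q1 Q2 Q3 Q4 Q5] := IH tT'.
have B := ballP t tT' Q3 Q5.
have thS : th t.+1 = th t - eta *: ((A *m Jf (th t))^T *m r t).
  by rewrite trmx_mul; reflexivity.
have thlS : thl t.+1 = thl t - eta *: ((A *m J)^T *m rl t).
  by rewrite trmx_mul; reflexivity.
have rdef t' : r t' = A *m f (th t') - y by [].
have rlE' t' : rl t' = A *m f theta0 + A *m J *m (thl t' - theta0) - y by [].
clearbody r rl. clearbody th thl.
have htT : t%:R <= T%:R :> R by rewrite ler_nat.
have RR : Rad / 2 <= Rad by lra.
set g := (A *m Jf (th t))^T *m r t in thS.
have gE : g = (A *m Jf (th t))^T *m r t by [].
clearbody g.
have hDe : th t.+1 - th t = (- eta) *: g.
  by rewrite thS; apply/matrixP => i j; rewrite !mxE; ring.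
have oB : opb (A *m Jf (th t)) (gamma * beta) := opb_mul g0 oA (oJf _).
have gb0 : 0 <= gamma * beta := mulr_ge0 g0 b0'.
have hg : enorm g <= gamma * beta * enorm (r t) by rewrite gE; exact: opb_tr gb0 oB (r t).
have hDn : enorm (th t.+1 - th t) = eta * enorm g by rewrite hDe enormZ normrN ger0_norm.
have hrl : enorm (rl t) <= r0 := sq_le _ _ r00 Q4.
have hr : enorm (r t) <= r0 + enorm (rl t - r t).
  have h := enormB (rl t) (rl t - r t).
  have e : rl t - (rl t - r t) = r t by rewrite opprB addrC subrK.
  rewrite e in h; lra.
set c := eta * gamma ^+ 2 * (eps0 ^+ 2 + beta * eps).
have c0 : 0 <= c by rewrite /c !mulr_ge0 ?sqr_ge0 // addr_ge0 ?sqr_ge0 // mulr_ge0.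
have Q2' : enorm (rl t - r t) <= 2 * c * t%:R * r0 by rewrite /c; lra.
have hr2 : enorm (r t) <= (1 + 2 * c * T%:R) * r0.
  have : 2 * c * t%:R * r0 <= 2 * c * T%:R * r0.
    by rewrite ler_wpM2r // ler_wpM2l // mulr_ge0.
  lra.
have hr4 : enorm (r t) <= 2 * r0.
  apply: sq_le; first by rewrite mulr_ge0.
  have hxT : 2 * x * T%:R <= 1 by rewrite /x; lra.
  have hp := pow_bound x t T x0 hxT tT'.
  apply: (le_trans Q1); rewrite exprMn.
  have := sqr_ge0 r0; nra.
set MM := Num.max _ _ in hRad.
have hmx : eta * gamma * beta * (1 + 2 * eta * gamma ^+ 2 * (eps0 ^+ 2 + beta * eps) * T%:R) <= MM.
  by rewrite /MM le_max lexx.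
have hDR : enorm (th t.+1 - th t) <= Rad / 2.
  rewrite hDn.
  have h1 := ler_wpM2l eta0' (le_trans hg (ler_wpM2l gb0 hr2)).
  have h2 := ler_wpM2l (mulr_ge0 (ler0n _ 2) r00) hmx.
  have h3 : eta * (gamma * beta * ((1 + 2 * c * T%:R) * r0)) =
     eta * gamma * beta * (1 + 2 * eta * gamma ^+ 2 * (eps0 ^+ 2 + beta * eps) * T%:R) * r0.
    by rewrite /c; ring.
  rewrite h3 in h1; have h4 := le_trans h2 hRad.
  set X := eta * gamma * beta * _ in h1 h4.
  have e5 : 2 * r0 * X = 2 * (X * r0) by ring.
  rewrite e5 in h4.
  lra.
have hseg s : 0 <= s <= 1 -> enorm (th t + s *: (th t.+1 - th t) - theta0) <= Rad.
  move=> /andP[s0 s1].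
  have -> : th t + s *: (th t.+1 - th t) - theta0 = (th t - theta0) + s *: (th t.+1 - th t).
    by apply/matrixP => i j; rewrite !mxE; ring.
  rewrite (le_trans (enormD _ _)) // enormZ ger0_norm //.
  have := enorm_ge0 (th t.+1 - th t); nra.
have hbt : opb (Jf (th t) - Jf theta0) (eps / 2) := opnormP (hball _ (le_trans B RR)).
have hbs s (hs : 0 <= s <= 1) : opb (Jf (th t + s *: (th t.+1 - th t)) - Jf theta0) (eps / 2) :=
  opnormP (hball _ (hseg s hs)).
have e20 : 0 <= eps / 2 by lra.
have m1 : enorm (f (th t.+1) - f (th t) - Jf (th t) *m (th t.+1 - th t)) <= eps * enorm (th t.+1 - th t).
  apply: (mvt_bound fd hd e0') => s hs.
  have := opb_sub (hbs s hs) hbt; rewrite opprB addrA subrK => h.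
  by apply: (opb_le h); lra.
have m2 : enorm (f (th t.+1) - f (th t) - Jf theta0 *m (th t.+1 - th t)) <= eps / 2 * enorm (th t.+1 - th t).
  by apply: (mvt_bound fd hd e20) => s hs; exact: hbs.
set e1 := f (th t.+1) - f (th t) - Jf (th t) *m (th t.+1 - th t) in m1.
have e1E : e1 = f (th t.+1) - f (th t) - Jf (th t) *m (th t.+1 - th t) by [].
set e2 := f (th t.+1) - f (th t) - Jf theta0 *m (th t.+1 - th t) in m2.
have e2E : e2 = f (th t.+1) - f (th t) - Jf theta0 *m (th t.+1 - th t) by [].
clearbody e1 e2.
rewrite hDn in m1 m2.
have hEta' : eta * (gamma * beta) ^+ 2 <= 1 by rewrite exprMn; lra.
have rS1 : r t.+1 = (r t - eta *: (A *m Jf (th t) *m g)) + A *m e1.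
  rewrite !rdef e1E hDe !mulmxBr -!scalemxAr !mulmxA.
  by apply/matrixP => i j; rewrite !mxE; ring.
have hc1 := contr (r t) oB eta0' hEta'.
rewrite -gE in hc1.
set s1 := enorm (r t - eta *: (A *m Jf (th t) *m g)).
have hAe1 : enorm (A *m e1) <= gamma * eps * eta * enorm g.
  apply: (le_trans (oA e1)).
  have := ler_wpM2l g0 m1; lra.
have hr1 : enorm (r t.+1) <= s1 + gamma * eps * eta * enorm g.
  by rewrite rS1 (le_trans (enormD _ _)) // lerD2l.
have st := step_r s1 (enorm g) (enorm (r t)) (gamma * eps) eta
  (enorm_ge0 _) (enorm_ge0 g) eta0' hc1.
have Q1' : enorm (r t.+1) ^+ 2 <= (1 + x) ^+ t.+1 * r0 ^+ 2.
  have h1 : enorm (r t.+1) ^+ 2 <= (s1 + gamma * eps * eta * enorm g) ^+ 2.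
    apply: lerXn2r; rewrite ?nnegrE ?enorm_ge0 //.
    by rewrite addr_ge0 ?enorm_ge0 // !mulr_ge0 ?enorm_ge0.
  have e : 1 + eta * (gamma * eps) ^+ 2 = 1 + x by rewrite /x exprMn; ring.
  rewrite e in st.
  rewrite (exprS (1 + x) t) -mulrA; apply: (le_trans h1); apply: (le_trans st).
  by rewrite ler_wpM2l // addr_ge0.
set gl := (A *m J)^T *m rl t in thlS.
have glE : gl = (A *m J)^T *m rl t by [].
clearbody gl.
have rlS : rl t.+1 = rl t - eta *: (A *m J *m gl).
  rewrite !rlE' thlS !mulmxBr -!scalemxAr ?mulmxA.
  by apply/matrixP => i j; rewrite !mxE; ring.
have oJB : opb (A *m J) (gamma * beta) := opb_mul g0 oA oJ.
have hc2 := contr (rl t) oJB eta0' hEta'.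
rewrite -glE -rlS in hc2.
have Q4' : enorm (rl t.+1) ^+ 2 <= r0 ^+ 2.
  have : 0 <= eta * enorm gl ^+ 2 by rewrite mulr_ge0 ?sqr_ge0.
  lra.
have Q5' : enorm (thl t.+1 - theta0) ^+ 2 <=
    t.+1%:R * eta * (r0 ^+ 2 - enorm (rl t.+1) ^+ 2).
  have e : thl t.+1 - theta0 = (thl t - theta0) - eta *: gl.
    by rewrite thlS; apply/matrixP => i j; rewrite !mxE; ring.
  have h1 : enorm (thl t.+1 - theta0) <= enorm (thl t - theta0) + eta * enorm gl.
    by rewrite e (le_trans (enormB _ _)) // enormZ ger0_norm.
  have h2 : enorm (thl t.+1 - theta0) ^+ 2 <= (enorm (thl t - theta0) + eta * enorm gl) ^+ 2.
    apply: lerXn2r; rewrite ?nnegrE ?enorm_ge0 //.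
    by rewrite addr_ge0 ?enorm_ge0 // !mulr_ge0 ?enorm_ge0.
  apply: (le_trans h2); rewrite -natr1.
  apply: (cs_step _ _ _ _ (r0 ^+ 2 - enorm (rl t) ^+ 2)); rewrite ?enorm_ge0 ?ler0n //.
    by rewrite subr_ge0.
  lra.
have rS2 : r t.+1 = r t + (A *m e2 - eta *: (A *m Jf theta0 *m g)).
  rewrite !rdef e2E hDe !mulmxBr -!scalemxAr !mulmxA.
  by apply/matrixP => i j; rewrite !mxE; ring.
have hid2 : rl t.+1 - r t.+1 =
   ((rl t - r t) - eta *: (A *m J *m ((A *m J)^T *m (rl t - r t)))) +
   eta *: (A *m Jf theta0 *m g - A *m J *m ((A *m J)^T *m r t)) - A *m e2.
  rewrite rlS rS2 glE !mulmxBr !mulmxA.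
  by apply/matrixP => i j; rewrite !mxE; ring.
have hc3 := contr (rl t - r t) oJB eta0' hEta'.
have hc3' : enorm ((rl t - r t) - eta *: (A *m J *m ((A *m J)^T *m (rl t - r t))))
    <= enorm (rl t - r t).
  apply: sq_le; first exact: enorm_ge0.
  apply: (le_trans hc3).
  have : 0 <= eta * enorm ((A *m J)^T *m (rl t - r t)) ^+ 2 by rewrite mulr_ge0 ?sqr_ge0.
  lra.
have hmidE : A *m Jf theta0 *m g - A *m J *m ((A *m J)^T *m r t) =
    A *m ((Jf theta0 *m (Jf (th t))^T - J *m J^T) *m (A^T *m r t)).
  by rewrite gE !trmx_mul mulmxBl mulmxBr !mulmxA.
have oM : opb (Jf theta0 *m (Jf (th t))^T - J *m J^T) (eps0 ^+ 2 + beta * (eps / 2)).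
  have -> : Jf theta0 *m (Jf (th t))^T - J *m J^T =
     (Jf theta0 *m (Jf theta0)^T - J *m J^T) + Jf theta0 *m (Jf (th t) - Jf theta0)^T.
    by rewrite trmxB mulmxBr; apply/matrixP => i j; rewrite !mxE; ring.
  exact: opb_add oJJ (opb_mul b0' (oJf theta0) (opb_tr e20 hbt)).
have hmid : enorm (A *m Jf theta0 *m g - A *m J *m ((A *m J)^T *m r t)) <=
    gamma * ((eps0 ^+ 2 + beta * (eps / 2)) * (gamma * enorm (r t))).
  rewrite hmidE; apply: (le_trans (oA _)); rewrite ler_wpM2l //.
  apply: (le_trans (oM _)); rewrite ler_wpM2l ?addr_ge0 ?sqr_ge0 ?mulr_ge0 //.
  exact: opb_tr g0 oA (r t).
have hAe2 : enorm (A *m e2) <= gamma * (eps / 2 * (eta * enorm g)).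
  by apply: (le_trans (oA e2)); rewrite ler_wpM2l.
have Q2'' : enorm (rl t.+1 - r t.+1) <=
    2 * eta * gamma ^+ 2 * (eps0 ^+ 2 + beta * eps) * t.+1%:R * r0.
  rewrite hid2.
  have h1 : enorm (((rl t - r t) - eta *: (A *m J *m ((A *m J)^T *m (rl t - r t)))) +
     eta *: (A *m Jf theta0 *m g - A *m J *m ((A *m J)^T *m r t)) - A *m e2) <=
     enorm (rl t - r t) + eta * (gamma * ((eps0 ^+ 2 + beta * (eps / 2)) * (gamma * enorm (r t))))
     + gamma * (eps / 2 * (eta * enorm g)).
    apply: (le_trans (enormB _ _)); apply: lerD => //.
    apply: (le_trans (enormD _ _)); apply: lerD => //.
    by rewrite enormZ ger0_norm // ler_wpM2l.
  apply: (le_trans h1).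
  have h2 : gamma * (eps / 2 * (eta * enorm g)) <=
            gamma * (eps / 2 * (eta * (gamma * beta * enorm (r t)))).
    by rewrite ler_wpM2l // ler_wpM2l // ler_wpM2l.
  have h3 : eta * (gamma * ((eps0 ^+ 2 + beta * (eps / 2)) * (gamma * enorm (r t)))) +
      gamma * (eps / 2 * (eta * (gamma * beta * enorm (r t)))) = c * enorm (r t).
    by rewrite /c; field.
  have h4 : c * enorm (r t) <= c * (2 * r0) by rewrite ler_wpM2l.
  have eG : 2 * eta * gamma ^+ 2 * (eps0 ^+ 2 + beta * eps) * t.+1%:R * r0 =
     2 * c * t%:R * r0 + c * (2 * r0) by rewrite -natr1 /c; ring.
  rewrite eG; lra.
have hid3 : thl t.+1 - th t.+1 = (thl t - th t) - eta *:
    ((J - Jf (th t))^T *m (A^T *m rl t) + (Jf (th t))^T *m (A^T *m (rl t - r t))).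
  rewrite thlS thS glE gE !trmx_mul trmxB mulmxBl !mulmxBr ?mulmxA.
  by apply/matrixP => i j; rewrite !mxE; ring.
have oJJt : opb (J - Jf (th t)) (eps0 + eps / 2).
  have -> : J - Jf (th t) = (J - Jf theta0) - (Jf (th t) - Jf theta0).
    by rewrite opprB addrA subrK.
  apply: opb_sub hbt; have := opbN oJ0; by rewrite opprB.
have hX1 : enorm ((J - Jf (th t))^T *m (A^T *m rl t)) <= (eps0 + eps / 2) * (gamma * r0).
  apply: (le_trans (opb_tr (addr_ge0 e00' e20) oJJt _)).
  rewrite ler_wpM2l ?addr_ge0 //; apply: (le_trans (opb_tr g0 oA _)).
  by rewrite ler_wpM2l.
have hX2 : enorm ((Jf (th t))^T *m (A^T *m (rl t - r t))) <= beta * (gamma * (2 * c * t%:R * r0)).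
  apply: (le_trans (opb_tr b0' (oJf _) _)).
  rewrite ler_wpM2l //; apply: (le_trans (opb_tr g0 oA _)).
  by rewrite ler_wpM2l.
have Q3' : enorm (thl t.+1 - th t.+1) <= eta * gamma * E t.+1 * t.+1%:R * r0.
  rewrite hid3.
  have h1 := enormB (thl t - th t) (eta *: ((J - Jf (th t))^T *m (A^T *m rl t) +
     (Jf (th t))^T *m (A^T *m (rl t - r t)))).
  rewrite enormZ ger0_norm // in h1.
  have h2 := enormD ((J - Jf (th t))^T *m (A^T *m rl t))
     ((Jf (th t))^T *m (A^T *m (rl t - r t))).
  have h3 := ler_wpM2l eta0' (le_trans h2 (lerD hX1 hX2)).
  have eq : eta * gamma * E t.+1 * t.+1%:R * r0 = eta * gamma * E t * t%:R * r0 +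
     eta * ((eps0 + eps / 2) * (gamma * r0) + beta * (gamma * (2 * c * t%:R * r0))) +
     eta * gamma * r0 * (eps / 2 + eta * gamma ^+ 2 * beta * (eps0 ^+ 2 + eps * beta)).
    by rewrite /E -natr1 /c; field.
  have h4 : 0 <= eta * gamma * r0 * (eps / 2 + eta * gamma ^+ 2 * beta * (eps0 ^+ 2 + eps * beta)).
    have k0 : 0 <= eta * gamma ^+ 2 * beta * (eps0 ^+ 2 + eps * beta).
      by rewrite !mulr_ge0 ?sqr_ge0 // addr_ge0 ?sqr_ge0 // mulr_ge0.
    by rewrite mulr_ge0 ?addr_ge0 // !mulr_ge0.
  rewrite eq; lra.
by split.
Qed.
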